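(* Let $G=(N,A)$ be an $s$-$t$ DAG (parallel arcs allowed) and let $uv\in A$. Then $uv$ is an $s$-dominator if and only if $d^+_v\ge 1$ and $d^-_v=1$; and $uv$ is a $t$-dominator if and only if $d^-_u\ge 1$ and $d^+_u=1$.
   Context: An $s$-$t$ DAG is a directed acyclic multigraph with a unique source $s$ and a unique sink $t$ such that every node is reachable from $s$ and every node reaches $t$. $d^-_v$ and $d^+_v$ denote the indegree and outdegree of $v$ (counting parallel arcs). An arc $ab$ $s$-dominates an arc $xy$ if $ab=xy$ or every $s$-$x$ path contains $ab$; $ab$ $t$-dominates $xy$ if $ab=xy$ or every $y$-$t$ path contains $ab$. An arc is an $s$-dominator (resp. $t$-dominator) if it $s$-dominates (resp. $t$-dominates) some arc different from itself. *)

(* Defs.v *)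
(* A directed multigraph is given by a finite node type N,
   a finite arc type A and endpoint maps src tgt : A -> N (parallel arcs allowed). *)
From mathcomp Require Import all_boot.
Set Implicit Arguments. Unset Strict Implicit. Unset Printing Implicit Defensive.

Section Digraph.
Variables (N A : finType) (src tgt : A -> N).

Fixpoint walk (x : N) (p : seq A) (y : N) : bool :=
  match p with
  | [::] => x == y
  | a :: q => (src a == x) && walk (tgt a) q y
  end.

Definition indeg (v : N) : nat := #|[set a | tgt a == v]|.
Definition outdeg (v : N) : nat := #|[set a | src a == v]|.

Definition acyclic : Prop := forall x p, walk x p x -> p = [::].

Definition st_dag (s t : N) : Prop :=
  [/\ acyclic,
      forall v, indeg v = 0 <-> v = s,
      forall v, outdeg v = 0 <-> v = t,
      forall v, exists p, walk s p v &
      forall v, exists p, walk v p t].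

Definition s_dominates (s : N) (ab xy : A) : Prop :=
  ab = xy \/ forall p, walk s p (src xy) -> ab \in p.
Definition t_dominates (t : N) (ab xy : A) : Prop :=
  ab = xy \/ forall p, walk (tgt xy) p t -> ab \in p.

Definition s_dominator (s : N) (ab : A) : Prop :=
  exists xy, xy <> ab /\ s_dominates s ab xy.
Definition t_dominator (t : N) (ab : A) : Prop :=
  exists xy, xy <> ab /\ t_dominates t ab xy.

End Digraph.

(* Main.v *)
Require Import Defs.
From mathcomp Require Import all_boot.
Set Implicit Arguments. Unset Strict Implicit. Unset Printing Implicit Defensive.

Section S.
Variables (N A : finType) (src tgt : A -> N).

Lemma walk_catP x p q y z : walk src tgt x p y -> walk src tgt y q z ->
  walk src tgt x (p ++ q) z.
Proof.
elim: p x => [|a p IH] x /=; first by move/eqP->.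
by case/andP=> -> /IH H /H ->.
Qed.

Lemma walk_catE x p q z : walk src tgt x (p ++ q) z ->
  exists y, walk src tgt x p y /\ walk src tgt y q z.
Proof.
elim: p x => [|a p IH] x /=; first by move=> W; exists x; rewrite eqxx.
by case/andP=> /eqP <- /IH [y [H1 H2]]; exists y; rewrite eqxx H1.
Qed.

Lemma no_cycle x p a : acyclic src tgt -> walk src tgt x p (src a) ->
  tgt a = x -> False.
Proof.
move=> acyc W E.
have W2 : walk src tgt x (p ++ [:: a]) x.
  by apply: walk_catP W _; rewrite /= eqxx E eqxx.
by have := acyc _ _ W2; case: p {W W2}.
Qed.

Lemma s_part s t (H : st_dag src tgt s t) uv :
  s_dominator src tgt s uv <->
  1 <= outdeg src (tgt uv) /\ indeg tgt (tgt uv) = 1.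
Proof.
case: H => acyc Hin Hout Hreach _.
split.
- case=> xy [neq [E|Hd]]; first by case: neq.
  case: (Hreach (src xy)) => p0 W0.
  have Hm := Hd _ W0; case/splitPr: Hm W0 => p1 p2 W.
  case: (walk_catE W) => y [W1 /= /andP [/eqP Hy W2]].
  split.
  + rewrite /outdeg card_gt0; apply/set0Pn.
    case: p2 W2 {W Hd} => [|a p2] /=.
      by move/eqP=> e; exists xy; rewrite inE e.
    by case/andP=> /eqP e _; exists a; rewrite inE e.
  + rewrite /indeg; apply/eqP/cards1P; exists uv; apply/setP=> a.
    rewrite !inE; apply/eqP/eqP => [Ha|->//].
    case: (Hreach (src a)) => q Wq.
    have Wq2 : walk src tgt s (q ++ a :: p2) (src xy).
      by apply: walk_catP Wq _; rewrite /= eqxx Ha.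
    have := Hd _ Wq2; rewrite mem_cat in_cons.
    case/or3P => [Hq|/eqP//|Hp].
    * case/splitPr: Hq Wq => q1 q2 Wq.
      case: (walk_catE Wq) => y' [_ /= /andP [_ Wq']].
      by case: (no_cycle acyc Wq' Ha).
    * case/splitPr: Hp W2 => r1 r2 Wr.
      case: (walk_catE Wr) => y' [Wr1 /= /andP [/eqP e _]].
      by move: Wr1; rewrite -e => Wr1; case: (no_cycle acyc Wr1 erefl).
- case=> Ho Hi.
  move: Ho; rewrite /outdeg card_gt0 => /set0Pn [xy]; rewrite inE => /eqP Exy.
  have uniq1 : forall a, tgt a = tgt uv -> a = uv.
    move=> a Ha; move/eqP/cards1P: Hi => [z Hz].
    have : a \in [set a | tgt a == tgt uv] by rewrite inE Ha.
    have : uv \in [set a | tgt a == tgt uv] by rewrite inE.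
    by rewrite Hz !inE => /eqP -> /eqP.
  exists xy; split.
    move=> e; subst xy.
    by apply: (@no_cycle (tgt uv) [::] uv acyc _ erefl); rewrite /= Exy.
  right=> p; rewrite Exy.
  case/lastP: p => [|q a] /=.
    move/eqP=> e; have := proj2 (Hin s) erefl; by rewrite e Hi.
  rewrite -cats1 => W; case: (walk_catE W) => y [_ /= /andP [_ /eqP Ha]].
  by rewrite (uniq1 _ Ha) mem_cat inE eqxx orbT.
Qed.

End S.

Lemma walk_rev (N A : finType) (src tgt : A -> N) x p y :
  walk src tgt x p y -> walk tgt src y (rev p) x.
Proof.
elim: p x => [|a p IH] x /=; first by move/eqP->.
case/andP=> /eqP <- /IH W.
rewrite rev_cons -cats1; apply: walk_catP W _.
by rewrite /= !eqxx.
Qed.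

Theorem lemma5 (N A : finType) (src tgt : A -> N) (s t : N) :
  st_dag src tgt s t ->
  forall uv : A,
    (s_dominator src tgt s uv <->
       1 <= outdeg src (tgt uv) /\ indeg tgt (tgt uv) = 1) /\
    (t_dominator src tgt t uv <->
       1 <= indeg tgt (src uv) /\ outdeg src (src uv) = 1).
Proof.
move=> H uv; split; first exact: s_part H uv.
have Hr : st_dag tgt src t s.
  case: H => acyc Hin Hout Hreach Hreach2; split => //.
  - move=> x p W; have := acyc _ _ (walk_rev W).
    by case: p {W} => // a p; rewrite rev_cons; case: (rev p).
  - by move=> v; case: (Hreach2 v) => p W; exists (rev p); exact: walk_rev.
  - by move=> v; case: (Hreach v) => p W; exists (rev p); exact: walk_rev.
have E : t_dominator src tgt t uv <-> s_dominator tgt src t uv.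
  split; case=> xy [neq D]; exists xy; split; try exact: neq.
  - case: D => [->|D]; [by left|right].
    by move=> p W; rewrite -mem_rev; apply: D; exact: walk_rev.
  - case: D => [->|D]; [by left|right].
    by move=> p W; rewrite -mem_rev; apply: D; exact: walk_rev.
exact: iff_trans E (s_part Hr uv).
Qed.
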